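(* If $G$ is a graph with a min-max clique covering satisfying simple intersection, then its compressed cliques graph $\mathcal{C}(G)$ does not contain a suspended cycle.
   Context: A clique covering of a graph is a set of cliques such that every edge lies in at least one of them; $\operatorname{cc}(G)$ is its minimum size. A min-max clique covering is a clique covering of size $\operatorname{cc}(G)$ consisting of maximal cliques; it has simple intersection if no three distinct cliques of it share a vertex. Given such a covering $\{C_1,\dots,C_\ell\}$, put $C_{i,j}=C_i\cap C_j$ ($i\ne j$) and $C_{i,i}=C_i\setminus\bigcup_{j\ne i}C_j$; the compressed cliques graph $\mathcal{C}(G)$ has a vertex $v_{i,j}$ for each non-empty $C_{i,j}$ (including $i=j$), with $v_{i,j}\sim v_{i',j'}$ iff $\{i,j\}\cap\{i',j'\}\ne\emptyset$. A cycle $u_1u_2\cdots u_tu_1$ in a graph $X$ is suspended if exactly one of $u_1,\dots,u_t$ has degree larger than two in $X$ and all the others have degree two in $X$. *)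

(* Defs.v *)
From mathcomp Require Import all_boot.
Set Implicit Arguments. Unset Strict Implicit. Unset Printing Implicit Defensive.

Section Defs.
Variable T : finType.
Variable e : rel T.

Definition is_clique (C : {set T}) : bool :=
  [forall x in C, forall y in C, (x != y) ==> e x y].

Definition is_maximal_clique (C : {set T}) : bool :=
  is_clique C && [forall D : {set T}, (is_clique D && (C \subset D)) ==> (D == C)].

Definition clique_covering (P : {set {set T}}) : bool :=
  [forall C in P, is_clique C] &&
  [forall x, forall y, e x y ==> [exists C in P, (x \in C) && (y \in C)]].

(* cc(G): the minimum size of a clique covering (the index #|{set {set T}}| is
   an upper bound on #|P| for every P, and coverings always exist). *)
Definition cc : nat :=
  \big[minn/#|{set {set T}}|]_(P : {set {set T}} | clique_covering P) #|P|.

Definition minmax_clique_covering (P : {set {set T}}) : Prop :=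
  clique_covering P /\ #|P| = cc /\ (forall C, C \in P -> is_maximal_clique C).

Definition simple_intersection (P : {set {set T}}) : Prop :=
  forall A B C, A \in P -> B \in P -> C \in P ->
    A != B -> B != C -> A != C -> A :&: B :&: C = set0.
End Defs.

Section Compressed.
Variable T : finType.
Variable P : {set {set T}}.

(* The vertex v_{i,j} (unordered pair {i,j},
   possibly i = j) is encoded as the set {C_i, C_j} of cliques of P:
   - a singleton {C} stands for v_{i,i}, present iff C_{i,i} = C \ U_{D != C} D
     is nonempty;
   - a pair {A, B} (A != B) stands for v_{i,j}, present iff A :&: B is nonempty. *)
Definition private_part (C : {set T}) : {set T} :=
  C :\: \bigcup_(D in P | D != C) D.

Definition cvertex (S : {set {set T}}) : bool :=
  (S \subset P) &&
  [|| [exists C, (S == [set C]) && (private_part C != set0)]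
    | [exists A, exists B, [&& A != B, S == [set A; B] & A :&: B != set0]]].

Definition cverts : {set {set {set T}}} := [set S | cvertex S].

Definition cadj : rel {set {set T}} :=
  fun S S' => [&& S \in cverts, S' \in cverts, S != S' & S :&: S' != set0].
End Compressed.

Section Suspended.
Variable U : finType.
Variable V : {set U}.
Variable adj : rel U.

Definition degree (u : U) : nat := #|[set w in V | adj u w]|.

Definition suspended_cycle (s : seq U) : Prop :=
  [/\ uniq s && (3 <= size s), all (fun u => u \in V) s, cycle adj s,
      count (fun u => 2 < degree u) s = 1 &
      all (fun u => (2 < degree u) || (degree u == 2)) s].
End Suspended.

(* Main.v *)
Require Import Defs.
From mathcomp Require Import all_boot.
Set Implicit Arguments. Unset Strict Implicit. Unset Printing Implicit Defensive.
Lemma cyc3 (U : eqType) (r : rel U) (s : seq U) (w : U) :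
  uniq s -> 3 <= size s -> w \in s -> cycle r s ->
  exists v1 v2 vp vpp, [/\ [&& v1 \in s, v2 \in s, vp \in s & vpp \in s],
    [&& r w v1, r v1 v2, r vp w & r vpp vp],
    v2 != w, vpp != w & v1 != vp].
Proof.
move=> us ss ws cs.
case: (rot_to ws) => i s' E.
have ul : uniq (w :: s') by rewrite -E rot_uniq.
have cl : cycle r (w :: s') by rewrite -E rot_cycle.
have sz : size (w :: s') = size s by rewrite -E size_rot.
have ml : forall x, x \in w :: s' -> x \in s by move=> x; rewrite -E mem_rot.
have [m Hm] : exists m, size s' = m.+2.
  by exists (size s').-2; move: ss; rewrite -sz /=; case: (size s') => [|[|k]].
set l := w :: s'.
move: cl; rewrite /cycle => /(pathP w) H.
have nl : forall k, k < size l -> nth w l k \in s.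
  by move=> k hk; apply: ml; exact: mem_nth.
have szl : size l = m.+3 by rewrite /l /= Hm.
have dif : forall i j, i < m.+3 -> j < m.+3 -> i != j -> nth w l i != nth w l j.
  by move=> i0 j0 hi hj; rewrite nth_uniq ?szl.
exists (nth w l 1), (nth w l 2), (nth w l m.+2), (nth w l m.+1).
have e0 : forall k, k < m.+2 -> nth w (rcons s' w) k = nth w l k.+1.
  by move=> k hk; rewrite nth_rcons Hm hk.
have e1 : nth w (rcons s' w) m.+2 = w by rewrite nth_rcons Hm ltnn eqxx.
have sr : size (rcons s' w) = m.+3 by rewrite size_rcons Hm.
split.
- by rewrite !nl ?szl.
- apply/and4P; split.
  + have := H 0; rewrite sr /= e0 //; exact.
  + have := H 1; rewrite sr /= !e0 //; exact.
  + have := H m.+2; rewrite sr ltnSn /= e0 // e1; exact.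
  + have := H m.+1; rewrite sr ltnS leqnSn /= !e0 //; exact.
- have -> : w = nth w l 0 by [].
  by apply: dif.
- have -> : w = nth w l 0 by [].
  by apply: dif.
- by apply: dif; rewrite ?ltnS ?ltn0Sn // eqSS.
Qed.

Lemma shape (T : finType) (P : {set {set T}}) S : S \in cverts P ->
  (exists C, [/\ S = [set C], C \in P & private_part P C != set0]) \/
  (exists A B, [/\ A != B, S = [set A; B], A \in P, B \in P & A :&: B != set0]).
Proof.
rewrite inE /cvertex => /andP [sub /orP [/existsP [C /andP [/eqP E h]]
  | /existsP [A /existsP [B /and3P [ab /eqP E h]]]]].
  left; exists C; split => //; apply: (subsetP sub); rewrite E set11 //.
right; exists A, B; split => //; apply: (subsetP sub); rewrite E !inE eqxx ?orbT //.
Qed.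

Lemma two (T : finType) (P : {set {set T}}) S N M : S \in cverts P ->
  N \in S -> M \in S -> N != M -> S = [set N; M].
Proof.
case/shape => [[C [-> _ _]] | [A [B [ab -> _ _ _]]]].
  by rewrite !inE => /eqP -> /eqP ->; rewrite eqxx.
rewrite !inE => /orP [] /eqP -> /orP [] /eqP ->; rewrite ?eqxx //.
by rewrite setUC.
Qed.

Lemma two3 (U : finType) (A : {set U}) a b c : #|A| <= 2 -> a \in A -> b \in A ->
  c \in A -> a != b -> c = a \/ c = b.
Proof.
move=> hA ha hb hc ab.
case: (eqVneq c a) => [->|ca]; first by left.
case: (eqVneq c b) => [->|cb]; first by right.
exfalso; move: hA.
have hb' : b \in A :\ a by rewrite !inE eq_sym ab hb.
have hc' : c \in A :\ a :\ b by rewrite !inE cb ca hc.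
rewrite (cardsD1 a A) ha (cardsD1 b (A :\ a)) hb' (cardsD1 c (A :\ a :\ b)) hc'.
by [].
Qed.

Lemma L1 (T : finType) (e : rel T) (P : {set {set T}})
  (hmax : forall C, C \in P -> is_maximal_clique e C) A B :
  [set A; B] \in cverts P -> A != B ->
  exists S', [/\ S' \in cverts P, A \in S' & S' != [set A; B]].
Proof.
move=> hS ab.
have [AP BP] : A \in P /\ B \in P.
  by move: hS; rewrite inE => /andP [/subsetP sub _]; rewrite !sub // !inE eqxx ?orbT.
case: (boolP (private_part P A != set0)) => hpr.
  exists [set A]; split; rewrite ?set11 //.
    rewrite inE /cvertex sub1set AP /=; apply/orP; left.
    by apply/existsP; exists A; rewrite eqxx hpr.
  apply/eqP => E; have : B \in [set A] by rewrite E !inE eqxx orbT.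
  by rewrite inE eq_sym (negbTE ab).
case: (boolP [exists D, [&& D \in P, D != A, D != B & A :&: D != set0]]).
  case/existsP => D /and4P [DP DA DB AD].
  exists [set A; D]; split; rewrite ?inE ?eqxx //.
    rewrite /cvertex; apply/andP; split.
      by apply/subsetP => x; rewrite !inE => /orP [] /eqP ->.
    apply/orP; right; apply/existsP; exists A; apply/existsP; exists D.
    by rewrite eq_sym DA eqxx AD.
  apply/eqP => E; have : D \in [set A; B] by rewrite -E !inE eqxx orbT.
  by rewrite !inE (negbTE DA) (negbTE DB).
move/negP => hno.
have sAB : A \subset B.
  apply/subsetP => x xA.
  move: hpr; rewrite negbK => /eqP hpr.
  have : x \in \bigcup_(D in P | D != A) D.
    apply/negPn/negP => hx.
    have : x \in private_part P A by rewrite /private_part inE hx xA.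
    by rewrite hpr inE.
  case/bigcupP => D /andP [DP DA] xD.
  case: (eqVneq D B) => [<- //|DB].
  exfalso; apply: hno; apply/existsP; exists D; rewrite DP DA DB /=.
  by apply/set0Pn; exists x; rewrite inE xA xD.
have := hmax A AP; case/andP => _ /forallP /(_ B).
have := hmax B BP; case/andP => cB _.
by rewrite cB sAB /= eq_sym (negbTE ab).
Qed.

Lemma cadj_sym (T : finType) (P : {set {set T}}) u x : cadj P u x = cadj P x u.
Proof. by rewrite /cadj andbCA eq_sym setIC. Qed.

Lemma cadjE (T : finType) (P : {set {set T}}) u x : cadj P u x ->
  [/\ u \in cverts P, x \in cverts P, u != x & exists y, y \in u /\ y \in x].
Proof.
by case/and4P => h1 h2 h3 /set0Pn [y]; rewrite inE => /andP [h4 h5]; split => //; exists y.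
Qed.

Lemma mkadj (T : finType) (P : {set {set T}}) u x y : u \in cverts P -> x \in cverts P ->
  u != x -> y \in u -> y \in x -> cadj P u x.
Proof.
move=> h1 h2 h3 h4 h5; rewrite /cadj h1 h2 h3 /=; apply/set0Pn; exists y.
by rewrite inE h4 h5.
Qed.

Lemma deg2 (T : finType) (P : {set {set T}}) u a b c :
  degree (cverts P) (cadj P) u <= 2 -> cadj P u a -> cadj P u b -> cadj P u c ->
  a != b -> c = a \/ c = b.
Proof.
move=> hd ha hb hc ab; apply: (two3 hd) => //; rewrite inE.
- by case/cadjE: (ha) => _ -> _ _; rewrite ha.
- by case/cadjE: (hb) => _ -> _ _; rewrite hb.
- by case/cadjE: (hc) => _ -> _ _; rewrite hc.
Qed.

Lemma key (T : finType) (e : rel T) (P : {set {set T}})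
  (hmax : forall C, C \in P -> is_maximal_clique e C) w v1 v2 :
  cadj P w v1 -> cadj P v1 v2 -> v2 != w ->
  degree (cverts P) (cadj P) v1 <= 2 -> degree (cverts P) (cadj P) v2 <= 2 ->
  exists N, [/\ N \in w, N \in v1 & forall S, S \in cverts P -> N \in S -> S = v1 \/ S = w].
Proof.
move=> a1 a2 v2w d1 d2.
have a1' : cadj P v1 w by rewrite cadj_sym.
have nb1 : forall S, cadj P v1 S -> S = w \/ S = v2.
  by move=> S hS; apply: (deg2 d1) => //; rewrite eq_sym.
case/cadjE: a1 => wV v1V wv1 [N [Nw Nv1]].
case/cadjE: (a2) => _ v2V v12 [y [yv1 yv2]].
case/shape: (v1V) => [[C [E1 CP _]] | [A [B [AB E1 AP BP _]]]].
  exfalso.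
  move: Nv1 yv1; rewrite E1 !inE => /eqP EN /eqP Ey; subst N y.
  have v2ne : v2 != [set C] by rewrite -E1 eq_sym.
  case/shape: (v2V) => [[C' [E2 _ _]] | [A [B [AB E2 AP BP _]]]].
    by move: yv2 v2ne; rewrite E2 inE => /eqP ->; rewrite eqxx.
  have [Z [ZC v2E]] : exists Z, Z != C /\ v2 = [set Z; C].
    move: yv2; rewrite E2 !inE => /orP [] /eqP EC; subst C.
      by exists B; split; [rewrite eq_sym | rewrite setUC].
    by exists A; split.
  have v2V' : [set Z; C] \in cverts P by rewrite -v2E.
  case: (L1 hmax v2V' ZC) => S' [S'V ZS' S'ne].
  rewrite -v2E in S'ne.
  have c1 : cadj P v2 v1 by rewrite cadj_sym.
  have c2 : cadj P v2 w by apply: (mkadj (y:=C)) => //; rewrite v2E !inE eqxx orbT.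
  have c3 : cadj P v2 S' by apply: (mkadj (y:=Z)) => //; [rewrite eq_sym | rewrite v2E !inE eqxx].
  have wv1' : v1 != w by rewrite eq_sym.
  case: (deg2 d2 c1 c2 c3 wv1') => E.
    by move: ZS'; rewrite E E1 inE (negbTE ZC).
  have : w = [set Z; C] by apply: (two wV) => //; rewrite -?E // eq_sym.
  by rewrite -v2E => /eqP; rewrite eq_sym (negbTE v2w).
have [M [NM v1E]] : exists M, N != M /\ v1 = [set N; M].
  move: Nv1; rewrite E1 !inE => /orP [] /eqP EN; subst N.
    by exists B; split.
  by exists A; split; [rewrite eq_sym | rewrite setUC].
have v1V' : [set M; N] \in cverts P by rewrite setUC -v1E.
have MN : M != N by rewrite eq_sym.
case: (L1 hmax v1V' MN).
move=> S' [S'V MS' S'ne].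
have S'ne' : v1 != S' by rewrite v1E setUC eq_sym.
have c : cadj P v1 S' by apply: (mkadj (y:=M)) => //; rewrite v1E !inE eqxx orbT.
have Mv2 : M \in v2.
  case: (nb1 _ c) => E; last by rewrite -E.
  exfalso; have : w = [set N; M] by apply: (two wV) => //; rewrite -E.
  by rewrite -v1E => /eqP; rewrite (negbTE wv1).
have Nv2 : N \notin v2.
  apply/negP => Nv2; have : v2 = [set N; M] by apply: (two v2V).
  by rewrite -v1E => /eqP; rewrite eq_sym (negbTE v12).
exists N; split => // S SV NS.
case: (eqVneq S v1) => [->|Sv1]; first by left.
have c' : cadj P v1 S by apply: (mkadj (y:=N)) => //; rewrite eq_sym.
case: (nb1 _ c') => E; first by right.
by move: NS; rewrite E (negbTE Nv2).
Qed.

Lemma uniq2 (U : eqType) (t : seq U) a b : uniq t -> a \in t -> b \in t -> a != b -> 1 < size t.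
Proof.
case: t => [|z [|z' t]] //= _; rewrite !inE => /eqP -> /eqP ->; by rewrite eqxx.
Qed.

Theorem mainTheorem19 (T : finType) (e : rel T)
    (e_sym : symmetric e) (e_irr : irreflexive e)
    (P : {set {set T}}) :
  minmax_clique_covering e P -> simple_intersection P ->
  forall s : seq {set {set T}}, ~ suspended_cycle (cverts P) (cadj P) s.
Proof.
move=> [_ [_ hmax]] _ s [/andP [us ss] alls cs cnt alldeg].
set deg := degree (cverts P) (cadj P).
have : has (fun u => 2 < deg u) s by rewrite has_count cnt.
case/hasP => w ws dw.
have small : forall u, u \in s -> u != w -> deg u <= 2.
  move=> u us' uw; rewrite leqNgt; apply/negP => du.
  have := uniq2 (t := filter (fun u => 2 < deg u) s) (a := u) (b := w).
  rewrite filter_uniq // size_filter cnt !mem_filter du dw us' ws /=.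
  by move/(_ isT isT isT uw).
case: (cyc3 us ss ws cs) => v1 [v2 [vp [vpp [/and4P [m1 m2 mp mpp]
  /and4P [a1 a2 ap app] n2 npp n1p]]]].
have ne : forall x y, cadj P x y -> x != y by move=> x y; case/cadjE.
have d1 : deg v1 <= 2 by apply: small => //; rewrite eq_sym ne.
have dp : deg vp <= 2 by apply: small => //; rewrite ne.
have d2 := small _ m2 n2.
have dpp := small _ mpp npp.
have ap' : cadj P w vp by rewrite cadj_sym.
have app' : cadj P vp vpp by rewrite cadj_sym.
case: (key hmax a1 a2 n2 d1 d2) => N [Nw Nv1 HN].
case: (key hmax ap' app' npp dp dpp) => N' [N'w N'vp HN'].
have NN' : N != N'.
  apply/eqP => E; subst N'.
  have vpV : vp \in cverts P by case/cadjE: ap.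
  case: (HN _ vpV N'vp) => E.
    by move: n1p; rewrite E eqxx.
  by move: (ne _ _ ap); rewrite E eqxx.
have wV : w \in cverts P by case/cadjE: a1.
have wE := two wV Nw N'w NN'.
have : deg w <= 2.
  apply: (leq_trans (n := #|[set v1; vp]|)); last by rewrite cards2; case: (_ != _).
  apply: subset_leq_card; apply/subsetP => x; rewrite inE => /andP [xV ax].
  case/cadjE: (ax) => _ _ wx [y [yw yx]].
  move: yw; rewrite wE !inE => /orP [] /eqP Ey; subst y.
    by case: (HN _ xV yx) => E; subst x; [rewrite eqxx | rewrite eqxx in wx].
  by case: (HN' _ xV yx) => E; subst x; [rewrite eqxx orbT | rewrite eqxx in wx].
by rewrite leqNgt dw.
Qed.
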